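(* For every integer $b\ge 0$, \[ \operatorname{trace}(A_b)=p(b)+\sum_{i=0}^{b-1}2^{b-i-1}p(i), \] where $p(m)$ denotes the number of unordered partitions of $m$ (with $p(0)=1$).
   Context: For an integer $b\ge 0$, an ordered partition of $b$ is a finite sequence $(q_1,\ldots,q_k)$ of positive integers summing to $b$ (for $b=0$ the only one is the empty sequence). An ordered partition $(q_1,\ldots,q_k)$ with $k\ge1$ is nontrivially embedded into an ordered partition $(r_1,\ldots,r_\ell)$ by a choice of indices $1\le i_2<\cdots<i_k\le \ell$ with $q_j\le r_{i_j}$ for $2\le j\le k$; different index tuples count as different embeddings. A card for $b$ balls is either (i) a trivial card, given by an ordered partition $q$ of $b$, with left and right partitions both $q$; or (ii) a throw card, given by ordered partitions $q$ ($k\ge1$ parts) and $r$ of $b$ together with a nontrivial embedding of $q$ into $r$, with left partition $q$ and right partition $r$. Different index tuples give different cards, and a throw card is distinct from the trivial card even when $q=r$. $A_b$ is the square matrix with rows and columns indexed by the ordered partitions of $b$ whose $(u,v)$ entry is the number of cards for $b$ balls with left partition $u$ and right partition $v$. *)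

(* Defs.v *)
From mathcomp Require Import all_boot all_order all_algebra.
Set Implicit Arguments. Unset Strict Implicit. Unset Printing Implicit Defensive.

Definition is_opart (b : nat) (q : seq nat) : bool :=
  all (fun x => 0 < x) q && (sumn q == b).

Fixpoint allseqs (m n : nat) : seq (seq nat) :=
  match n with
  | 0 => [:: [::]]
  | n'.+1 => [::] :: [seq x :: t | x <- iota 1 m, t <- allseqs m n']
  end.

Definition oparts (b : nat) : seq (seq nat) := filter (is_opart b) (allseqs b b).

(* number of nontrivial embeddings of q = (q_1,..,q_k), k >= 1, into
   r = (r_1,..,r_l): strictly increasing index tuples i_2 < ... < i_k
   (0-based here) with q_j <= r_{i_j} for 2 <= j <= k. *)
Definition n_embed (q r : seq nat) : nat :=
  if q is _ :: q' then
    #|[pred f : {ffun 'I_(size q') -> 'I_(size r)} |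
        [forall i : 'I_(size q'), forall j : 'I_(size q'), (i < j) ==> (f i < f j)] &&
        [forall j : 'I_(size q'), nth 0 q' j <= nth 0 r (f j)]]|
  else 0.

(* number of cards for b balls with left partition u and right partition v:
   the trivial card (if u = v) plus the throw cards *)
Definition ncards (u v : seq nat) : nat := (u == v) + n_embed u v.

Definition A (b : nat) : 'M[nat]_(size (oparts b)) :=
  \matrix_(i, j) ncards (nth [::] (oparts b) i) (nth [::] (oparts b) j).

Definition npart (m : nat) : nat :=
  count (fun q => is_opart m q && sorted geq q) (allseqs m m).

(* Main.v *)
Require Import Defs.
From mathcomp Require Import all_boot all_order all_algebra.
From mathcomp Require Import zify.
Set Implicit Arguments. Unset Strict Implicit.

Lemma mem_allseqs m n q :
  (q \in allseqs m n) = (size q <= n) && all (fun x => 0 < x <= m) q.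
Proof.
elim: n q => [|n IH] [|x q] //=.
rewrite in_cons /=.
apply/allpairsPdep/andP.
  move=> [x' [t [hx ht [-> ->]]]]; move: hx ht; rewrite IH mem_iota => hx /andP[h1 h2].
  by rewrite ltnS h1 h2 andbT; move: hx; lia.
move=> [hs /andP[hx ha]]; exists x, q; split => //.
  by rewrite mem_iota; lia.
by rewrite IH -ltnS hs.
Qed.

Lemma uniq_allseqs m n : uniq (allseqs m n).
Proof.
elim: n => [|n IH] //=; apply/andP; split.
  by apply/allpairsPdep => [[x [t [_ _ ]]]].
apply: allpairs_uniq; first exact: iota_uniq.
  exact: IH.
by move=> [a b] [c d] _ _ /= [-> ->].
Qed.

Lemma opart_bound b q : is_opart b q -> (size q <= b) && all (fun x => 0 < x <= b) q.
Proof.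
case/andP=> hp /eqP <-; apply/andP; split.
  elim: q hp => //= x q IH /andP[hx hq]; have := IH hq; lia.
apply/allP => x xq; rewrite (allP hp) //=.
elim: q xq {hp} => //= y q IH; rewrite in_cons => /orP[/eqP->|/IH]; lia.
Qed.

Lemma mem_oparts b q : (q \in oparts b) = is_opart b q.
Proof.
rewrite mem_filter; apply/andP/idP => [[] //|h]; split => //.
by rewrite mem_allseqs opart_bound.
Qed.

Lemma uniq_oparts b : uniq (oparts b).
Proof. exact/filter_uniq/uniq_allseqs. Qed.

Lemma oparts_perm b : 0 < b ->
  perm_eq (oparts b) [seq x :: t | x <- iota 1 b, t <- oparts (b - x)].
Proof.
move=> b0; apply: uniq_perm; first exact: uniq_oparts.
  apply: allpairs_uniq_dep; first exact: iota_uniq.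
    by move=> x _; apply: uniq_oparts.
  by move=> [a c] [d e] _ _ /= [eq1]; move: c e; rewrite eq1 => c e /= ->.
case=> [|x t].
  rewrite mem_oparts /is_opart /=; have -> : (0 == b) = false by lia.
  by apply/esym/negbTE/allpairsPdep => [[x [t [_ _ ]]]].
rewrite mem_oparts; apply/idP/allpairsPdep.
  rewrite /is_opart /= => /andP[/andP[x0 hp] /eqP hs].
  exists x, t; split => //; first by rewrite mem_iota; lia.
  by rewrite mem_oparts /is_opart hp /=; apply/eqP; lia.
move=> [x' [t' [hx ht [-> ->]]]]; move: hx ht; rewrite mem_iota mem_oparts.
rewrite /is_opart /= => hx /andP[hp /eqP hs]; rewrite hp andbT; apply/andP; split; lia.
Qed.

Lemma sum_oparts b (F : seq nat -> nat) : 0 < b ->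
  \sum_(u <- oparts b) F u = \sum_(1 <= x < b.+1) \sum_(t <- oparts (b - x)) F (x :: t).
Proof.
move=> b0; rewrite (perm_big _ (oparts_perm b0)) big_allpairs_dep.
by rewrite /index_iota subSS subn0.
Qed.

Lemma geq_trans : transitive geq.
Proof. by move=> a b c /= h1 h2; apply: leq_trans h2 h1. Qed.

Definition Pt (y i : nat) : seq (seq nat) :=
  [seq q <- allseqs i i | is_opart i q && sorted geq q && all (fun z => z <= y) q].

Lemma mem_Pt y i q : (q \in Pt y i) = is_opart i q && sorted geq q && all (fun z => z <= y) q.
Proof.
rewrite mem_filter; apply/andP/idP => [[] //|h]; split => //.
by rewrite mem_allseqs opart_bound //; case/andP: h => /andP[].
Qed.

Lemma uniq_Pt y i : uniq (Pt y i).
Proof. exact/filter_uniq/uniq_allseqs. Qed.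

Lemma Pt_perm y i : 0 < i ->
  perm_eq (Pt y i) [seq x :: t | x <- [seq x <- iota 1 i | x <= y], t <- Pt x (i - x)].
Proof.
move=> i0; apply: uniq_perm; first exact: uniq_Pt.
  apply: allpairs_uniq_dep; first exact/filter_uniq/iota_uniq.
    by move=> x _; apply: uniq_Pt.
  by move=> [a c] [d e] _ _ /= [eq1]; move: c e; rewrite eq1 => c e /= ->.
case=> [|x t].
  rewrite mem_Pt /is_opart /=; have -> : (0 == i) = false by lia.
  by apply/esym/negbTE/allpairsPdep => [[x [t [_ _ ]]]].
rewrite mem_Pt; apply/idP/allpairsPdep.
  rewrite /is_opart /= (path_sortedE geq_trans) => /andP[/andP[/andP[/andP[x0 hp] /eqP hs] /andP[hxt st]] /andP[xy ty]].
  exists x, t; split => //; first by rewrite mem_filter xy mem_iota; lia.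
  rewrite mem_Pt /is_opart hp st /=; apply/andP; split; first by apply/eqP; lia.
  by apply/allP => z zt; have := allP hxt z zt.
move=> [x' [t' [hx ht [-> ->]]]]; move: hx ht; rewrite mem_filter mem_iota mem_Pt.
rewrite /is_opart /= (path_sortedE geq_trans) => /andP[xy hx] /andP[/andP[/andP[hp /eqP hs] st] tx].
rewrite hp st xy tx /=.
have -> : x' + sumn t' == i by apply/eqP; lia.
have -> : 0 < x' by lia.
rewrite /=; apply/allP => z zt; have := allP tx z zt; rewrite /=; lia.
Qed.

Lemma size_Pt y i : 0 < i ->
  size (Pt y i) = \sum_(1 <= x < i.+1) (if x <= y then size (Pt x (i - x)) else 0).
Proof.
move=> i0; rewrite -sum1_size (perm_big _ (Pt_perm y i0)) big_allpairs_dep big_filter.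
rewrite /index_iota subSS subn0 big_mkcond /=; apply: eq_bigr => x _.
by case: ifP => // _; rewrite sum1_size.
Qed.
Fixpoint Lf (y : nat) (u : seq nat) : nat :=
  if u is x :: t then (if x <= y then (Lf x t).+1 else 0) else 0.

Definition Qn x t s := all (fun j => nth 0 t j <= nth 0 (x :: t) j) (iota 0 s).

Lemma count_Qn x t : count (Qn x t) (iota 0 (size t).+1) = (Lf x t).+1.
Proof.
elim: t x => [|y t IH] x; first by [].
have I n : iota 1 n = map (addn 1) (iota 0 n) by exact: (iotaDl 1 0 n).
rewrite (_ : iota 0 (size (y :: t)).+1 = 0 :: map (addn 1) (iota 0 (size t).+1)); last by rewrite -I.
have C (P : pred nat) a s : count P (a :: s) = P a + count P s by [].
rewrite C count_map.
have E : forall s, preim (addn 1) (Qn x (y :: t)) s = (y <= x) && Qn y t s.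
  move=> s; rewrite /preim /Qn /= add0n I all_map; congr (_ && _).
rewrite (eq_count E) (_ : Qn x (y :: t) 0 = true) // [Lf x _]/=; case: (y <= x).
  by rewrite (@eq_count _ _ (Qn y t)) // IH.
by rewrite (@eq_count _ _ pred0) ?count_pred0.
Qed.

Lemma card_count k (Q : pred nat) : #|[pred s : 'I_k | Q s]| = count Q (iota 0 k).
Proof.
rewrite -sum1_card -sum1_count -(big_mkord Q (fun _ => 1)).
by rewrite /index_iota subn0.
Qed.

Lemma gap n m (f : 'I_n -> 'I_m) : (forall i j : 'I_n, i < j -> f i < f j) ->
  forall i j : 'I_n, i <= j -> f i + (j - i) <= f j.
Proof.
move=> inc i j hij; have [d hd] : exists d, nat_of_ord j = i + d by exists (j - i); lia.
clear hij.
elim: d j hd => [|d IH] j hd.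
  have -> : j = i by apply: val_inj; rewrite /= hd addn0.
  lia.
have kn : i + d < n by have := ltn_ord j; lia.
have h1 := IH (Ordinal kn) erefl.
have h2 : f (Ordinal kn) < f j by apply: inc; rewrite /= hd; lia.
move: h1 h2 => /=; rewrite hd; lia.
Qed.

Lemma n_embed_self x t : n_embed (x :: t) (x :: t) = (Lf x t).+1.
Proof.
rewrite -count_Qn -card_count /n_embed.
set n := size t.
pose g (s : 'I_n.+1) : {ffun 'I_n -> 'I_(size (x :: t))} :=
  [ffun j : 'I_n => if j < s then widen_ord (leqnSn n) j else lift ord0 j].
have ginj : injective g.
  move=> s1 s2 /ffunP H; apply: val_inj => /=.
  case: (ltngtP s1 s2) => // h.
    have jn : s1 < n by have := ltn_ord s2; lia.
    have := H (Ordinal jn); rewrite !ffunE /= ltnn h => /(congr1 (@nat_of_ord _)).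
    rewrite lift0 /=; lia.
  have jn : s2 < n by have := ltn_ord s1; lia.
  have := H (Ordinal jn); rewrite !ffunE /= ltnn h => /(congr1 (@nat_of_ord _)).
  rewrite lift0 /=; lia.
rewrite -(card_imset _ ginj); apply: eq_card => f.
rewrite !inE; apply/idP/imsetP.
  case/andP => /forallP finc /forallP fcond.
  have inc : forall i j : 'I_n, i < j -> f i < f j.
    by move=> i j hij; have := forallP (finc i) j; rewrite hij.
  have lo : forall i : 'I_n, i <= f i.
    move=> i; have i0 : 0 < n by have := ltn_ord i; lia.
    have := @gap _ _ _ inc (Ordinal i0) i (leq0n _) => /=; lia.
  have hi : forall i : 'I_n, f i <= i.+1.
    move=> i; have i0 : n.-1 < n by have := ltn_ord i; lia.
    have := @gap _ _ _ inc i (Ordinal i0); have := ltn_ord (f (Ordinal i0)).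
    have := ltn_ord i; rewrite /=; lia.
  pose s := find (fun j : 'I_n => nat_of_ord (f j) != j) (enum 'I_n).
  have hs : s < n.+1 by have := find_size (fun j : 'I_n => nat_of_ord (f j) != j) (enum 'I_n); rewrite size_enum_ord.
  have A : forall j : 'I_n, j < s -> nat_of_ord (f j) = j.
    move=> j js.
    have ej : nth j (enum 'I_n) j = j by apply: val_inj; rewrite /= nth_enum_ord.
    have := before_find j js; rewrite ej => /negbFE/eqP.
    by [].
  have B : forall j : 'I_n, s <= j -> nat_of_ord (f j) = j.+1.
    move=> j sj.
    have hsn : s < n by have := ltn_ord j; lia.
    have hh : has (fun j : 'I_n => nat_of_ord (f j) != j) (enum 'I_n).
      by rewrite has_find size_enum_ord.
    have := nth_find j hh; rewrite -/s.
    set e := nth j (enum 'I_n) s.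
    have ve : nat_of_ord e = s by rewrite /e nth_enum_ord.
    move=> he.
    have := lo e; have := hi e; have := hi j.
    have ej : e <= j by rewrite ve.
    have := @gap _ _ _ inc e j ej; move: he; rewrite ve; lia.
  exists (Ordinal hs).
    rewrite inE /Qn; apply/allP => j; rewrite mem_iota add0n => /andP[_ js].
    have jn : j < n by move: js => /= js; lia.
    have js2 : Ordinal jn < s by [].
    by have := fcond (Ordinal jn); rewrite (A (Ordinal jn) js2).
  apply/ffunP => j; apply: val_inj; rewrite ffunE /=.
  case: ifP => h.
    by rewrite A.
  by rewrite lift0 B //; lia.
move=> [s]; rewrite inE /Qn => /allP hs ->.
apply/andP; split.
  apply/forallP => i; apply/forallP => j; apply/implyP => hij.
  move: hij; rewrite !ffunE; case: (ltnP j s) => hj; case: (ltnP i s) => hi0 /=; rewrite ?lift0 /= /bump /=; move: hj hi0; lia.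
apply/forallP => j; rewrite ffunE; case: ifP => h /=.
  by apply: hs; rewrite mem_iota.
by rewrite /= /bump /= add0n.
Qed.

Definition c b := size (oparts b).
Definition Pc y i := size (Pt y i).
Definition G y b := \sum_(u <- oparts b) Lf y u.
Definition H y b := \sum_(j < b.+1) Pc y j * c (b - j).

Lemma oparts0 : oparts 0 = [:: [::]]. Proof. by []. Qed.
Lemma c0 : c 0 = 1. Proof. by []. Qed.
Lemma Pc0 y : Pc y 0 = 1. Proof. by []. Qed.

Lemma c_rec b : 0 < b -> c b = \sum_(1 <= x < b.+1) c (b - x).
Proof.
move=> b0; rewrite /c -sum1_size (sum_oparts _ b0).
by apply: eq_bigr => x _; rewrite sum1_size.
Qed.

Lemma c_pow m : c m.+1 = 2 ^ m.
Proof.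
elim: m => [|m IH]; first by rewrite c_rec // big_nat1.
rewrite c_rec // big_ltn // subSS.
have -> : \sum_(2 <= x < m.+3) c (m.+2 - x) = \sum_(1 <= x < m.+2) c (m.+1 - x).
  by rewrite big_add1 /=; apply: eq_bigr => x _; rewrite subSS.
by rewrite -c_rec // IH expnS mul2n addnn.
Qed.

Lemma tri b (g : nat -> nat -> nat) :
  \sum_(1 <= j < b.+1) \sum_(1 <= x < j.+1) g x (j - x)
  = \sum_(1 <= x < b.+1) \sum_(0 <= k < (b - x).+1) g x k.
Proof.
elim: b => [|b IH]; first by rewrite !big_geq.
rewrite big_nat_recr //= IH.
rewrite (@big_nat_recr _ _ _ b.+1 1 (fun x => g x (b.+1 - x))) // subnn addnA. 
rewrite (@big_nat_recr _ _ _ b.+1 1 (fun x => \sum_(0 <= k < (b.+1 - x).+1) g x k)) // subnn big_nat1; congr (_ + _).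
rewrite -big_split /=; apply: eq_big_nat => x /andP[x1 xb].
have -> : (b.+1 - x).+1 = (b - x).+2 by lia.
rewrite [in RHS]big_nat_recr //=; congr (_ + _); congr (g x _); lia.
Qed.

Lemma R_lem y b : 0 < b ->
  c b + \sum_(1 <= x < b.+1) (if x <= y then H x (b - x) else 0) = H y b.
Proof.
move=> b0; rewrite [RHS]/H -(big_mkord xpredT (fun j => Pc y j * c (b - j))).
rewrite [RHS]big_ltn // Pc0 mul1n subn0; congr (_ + _); symmetry.
pose g x k := (if x <= y then Pc x k else 0) * c (b - x - k).
rewrite (eq_big_nat _ _ (F2 := fun j => \sum_(1 <= x < j.+1) g x (j - x))); last first.
  move=> j /andP[j1 jb]; rewrite /Pc size_Pt // big_distrl /=.
  apply: eq_big_nat => x /andP[x1 xj]; rewrite /g /Pc.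
  congr (_ * c _); lia.
rewrite tri; apply: eq_big_nat => x /andP[x1 xb]; rewrite /g.
case: (x <= y).
  by rewrite big_mkord /H.
by rewrite big1 // => k _; rewrite mul0n.
Qed.

Lemma M_lem b y : c b + G y b = H y b.
Proof.
elim/ltn_ind: b y => b IH y.
case: (posnP b) => [->|b0].
  by rewrite /G oparts0 big_seq1 /H big_ord1 Pc0 c0.
rewrite -(R_lem y b0) /G (sum_oparts _ b0); congr (_ + _).
apply: eq_big_nat => x /andP[x1 xb] /=.
case: ifP => xy.
  rewrite -IH; last by lia.
  rewrite /c /G -sum1_size -big_split /=; apply: eq_bigr => t _.
  by rewrite add1n.
by rewrite big1.
Qed.

Lemma npart_Pc b j : j <= b -> npart j = Pc b j.
Proof.
move=> jb; rewrite /npart /Pc /Pt size_filter; apply: eq_count => q.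
case h: (is_opart j q) => //=; case: (sorted geq q) => //=.
have /andP[_ ha] := opart_bound h.
by apply/esym/allP => z zq; have := allP ha z zq; lia.
Qed.

Lemma trace_eq b : (\tr (A b))%R = c b + G b b.
Proof.
have -> : (\tr (A b))%R = \sum_(i < size (oparts b)) ncards (nth [::] (oparts b) i) (nth [::] (oparts b) i).
  by rewrite /mxtrace; apply: eq_bigr => i _; rewrite mxE.
rewrite -(big_mkord xpredT (fun i => ncards (nth [::] (oparts b) i) (nth [::] (oparts b) i))).
rewrite -(big_nth [::] xpredT (fun u => ncards u u)).
rewrite /c /G -sum1_size -big_split /=; apply: eq_big_seq => u.
rewrite mem_oparts /ncards eqxx => h.
case: u h => [|x t] h; first by [].
rewrite n_embed_self /=.
have /andP[_ /andP[/andP[_ ->] _]] := opart_bound h.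
by [].
Qed.

Theorem theorem10 (b : nat) :
  (\tr (A b))%R = (npart b + \sum_(i < b) 2 ^ (b - i - 1) * npart i)%N.
Proof.
rewrite trace_eq M_lem /H big_ord_recr /= subnn c0 muln1 addnC -(npart_Pc (leqnn b)).
congr (_ + _); apply: eq_bigr => i _.
rewrite -(npart_Pc (ltnW (ltn_ord i))) mulnC.
have -> : b - i = (b - i - 1).+1 by have := ltn_ord i; lia.
by rewrite c_pow; congr (2 ^ _ * _); lia.
Qed.
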